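(* Let $T$ be a complete theory and $\phi,\psi$ formulas with $T\vdash\phi\,\mathtt U\,\psi$. Then $T\vdash\phi\,\mathtt u\,\psi$, or there exists $m\in\omega$ such that $T\vdash\bigwedge_{i=0}^m[\omega]^i\mathtt g(\phi\wedge\neg\psi)\wedge[\omega]^{m+1}(\phi\,\mathtt u\,\psi)$.
   Context: Fix $Var=\{p_n : n\in\omega\}$. The formulas of $L([1],[\omega],\mathtt u,\mathtt U)$ form the smallest set containing $Var$ and closed under $\neg\phi$, $[1]\phi$, $[\omega]\phi$, $(\phi\wedge\psi)$, $(\phi\,\mathtt u\,\psi)$, $(\phi\,\mathtt U\,\psi)$. Abbreviations: $\vee,\to,\leftrightarrow$ as usual; $\mathtt f\phi:=(\phi\to\phi)\,\mathtt u\,\phi$, $\mathtt g\phi:=\neg\mathtt f\neg\phi$; $[a]^0\phi:=\phi$, $[a]^{n+1}\phi:=[a][a]^n\phi$ for $a\in\{1,\omega\}$. A theory is a nonempty set of formulas. Proof system. Axioms: all instances of A1 substitution instances of classical tautologies; A2 $[1][\omega]\phi\leftrightarrow[\omega]\phi$; A3 $\neg[a]\phi\leftrightarrow[a]\neg\phi$ ($a\in\{1,\omega\}$); A4 $[a](\phi*\psi)\leftrightarrow([a]\phi*[a]\psi)$ ($a\in\{1,\omega\}$, $*\in\{\wedge,\vee,\to,\leftrightarrow\}$); A5 $\psi\to\phi\,\mathtt u\,\psi$; A6 $\phi\,\mathtt u\,\psi\to\phi\,\mathtt U\,\psi$; A7 $\big(\bigwedge_{k=0}^n[1]^k(\phi\wedge\neg\psi)\wedge[1]^{n+1}\psi\big)\to\phi\,\mathtt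 u\,\psi$ ($n\in\omega$); A8 $\big(\bigwedge_{k=0}^n[\omega]^k\mathtt g(\phi\wedge\neg\psi)\wedge[\omega]^{n+1}(\phi\,\mathtt u\,\psi)\big)\to\phi\,\mathtt U\,\psi$ ($n\in\omega$). Rules: R1 from $\phi$ and $\phi\to\psi$ infer $\psi$; R2 from $\phi$ infer $[a]\phi$, $a\in\{1,\omega\}$; R3 from $\theta\to\neg\psi$ and all $\theta\to\big(\bigvee_{k=0}^n[1]^k(\neg\phi\vee\psi)\vee[1]^{n+1}\neg\psi\big)$, $n\in\omega$, infer $\theta\to\neg(\phi\,\mathtt u\,\psi)$; R4 from $\theta\to\neg(\phi\,\mathtt u\,\psi)$ and all $\theta\to\big(\bigvee_{k=0}^n[\omega]^k\neg\mathtt g(\phi\wedge\neg\psi)\vee[\omega]^{n+1}\neg(\phi\,\mathtt u\,\psi)\big)$, $n\in\omega$, infer $\theta\to\neg(\phi\,\mathtt U\,\psi)$. $\vdash\phi$ ($\phi$ is a theorem) iff there is a sequence $(\phi_\beta)_{\beta\le\alpha}$, $\alpha$ a countable ordinal, with $\phi_\alpha=\phi$ and each $\phi_\beta$ an axiom or obtained from earlier members by a rule. $T\vdash\phi$ iff there is such a sequence in which each member is an axiom, a member of $T$, or obtained from earlier members by a rule, where R2 may only be applied to theorems. A theory $T$ is consistent iff there is no formula $\chi$ with $T\vdash\chi$ and $T\vdash\neg\chi$; $T$ is complete iff it is consistent and for every formula $\chi$, $T\vdash\chi$ or $T\vdash\neg\chi$. *)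

(* Defs.v *)
From Stdlib Require Import Arith.

Inductive form : Type :=
| Var   : nat -> form
| Neg   : form -> form
| Box1  : form -> form
| BoxW  : form -> form
| And   : form -> form -> form
| Until  : form -> form -> form   (* phi u psi *)
| UntilW : form -> form -> form.  (* phi U psi *)

Definition Or  (a b : form) : form := Neg (And (Neg a) (Neg b)).
Definition Imp (a b : form) : form := Or (Neg a) b.
Definition Iff (a b : form) : form := And (Imp a b) (Imp b a).
Definition Fut (a : form) : form := Until (Imp a a) a.
Definition Glob (a : form) : form := Neg (Fut (Neg a)).

Inductive modality := M1 | MW.
Definition box (a : modality) (p : form) : form :=
  match a with M1 => Box1 p | MW => BoxW p end.
Fixpoint boxn (a : modality) (n : nat) (p : form) : form :=
  match n with 0 => p | S n => box a (boxn a n p) end.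

Fixpoint bigAnd (F : nat -> form) (n : nat) : form :=
  match n with 0 => F 0 | S n' => And (bigAnd F n') (F (S n')) end.
Fixpoint bigOr (F : nat -> form) (n : nat) : form :=
  match n with 0 => F 0 | S n' => Or (bigOr F n') (F (S n')) end.

Inductive pform : Type :=
| PVar : nat -> pform
| PNeg : pform -> pform
| PAnd : pform -> pform -> pform.
Fixpoint peval (v : nat -> bool) (P : pform) : bool :=
  match P with
  | PVar n => v n
  | PNeg P => negb (peval v P)
  | PAnd P Q => andb (peval v P) (peval v Q)
  end.
Definition tautology (P : pform) : Prop := forall v, peval v P = true.
Fixpoint psubst (s : nat -> form) (P : pform) : form :=
  match P with
  | PVar n => s n
  | PNeg P => Neg (psubst s P)
  | PAnd P Q => And (psubst s P) (psubst s Q)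
  end.

Inductive binop := BAnd | BOr | BImp | BIff.
Definition binop_app (o : binop) (a b : form) : form :=
  match o with BAnd => And a b | BOr => Or a b | BImp => Imp a b | BIff => Iff a b end.

Inductive IsAxiom : form -> Prop :=
| A1 : forall P s, tautology P -> IsAxiom (psubst s P)
| A2 : forall p, IsAxiom (Iff (Box1 (BoxW p)) (BoxW p))
| A3 : forall a p, IsAxiom (Iff (Neg (box a p)) (box a (Neg p)))
| A4 : forall a o p q,
    IsAxiom (Iff (box a (binop_app o p q)) (binop_app o (box a p) (box a q)))
| A5 : forall p q, IsAxiom (Imp q (Until p q))
| A6 : forall p q, IsAxiom (Imp (Until p q) (UntilW p q))
| A7 : forall p q n,
    IsAxiom (Imp (And (bigAnd (fun k => boxn M1 k (And p (Neg q))) n)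
                    (boxn M1 (S n) q))
               (Until p q))
| A8 : forall p q n,
    IsAxiom (Imp (And (bigAnd (fun k => boxn MW k (Glob (And p (Neg q)))) n)
                    (boxn MW (S n) (Until p q)))
               (UntilW p q)).

Definition R3prem (th p q : form) (n : nat) : form :=
  Imp th (Or (bigOr (fun k => boxn M1 k (Or (Neg p) q)) n)
             (boxn M1 (S n) (Neg q))).
Definition R4prem (th p q : form) (n : nat) : form :=
  Imp th (Or (bigOr (fun k => boxn MW k (Neg (Glob (And p (Neg q))))) n)
             (boxn MW (S n) (Neg (Until p q)))).

Inductive Thm : form -> Prop :=
| t_ax  : forall p, IsAxiom p -> Thm p
| t_mp  : forall p q, Thm p -> Thm (Imp p q) -> Thm q
| t_nec : forall a p, Thm p -> Thm (box a p)
| t_R3  : forall th p q, Thm (Imp th (Neg q)) ->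
    (forall n, Thm (R3prem th p q n)) -> Thm (Imp th (Neg (Until p q)))
| t_R4  : forall th p q, Thm (Imp th (Neg (Until p q))) ->
    (forall n, Thm (R4prem th p q n)) -> Thm (Imp th (Neg (UntilW p q))).

(* T |- phi : R2 only applied to theorems *)
Inductive Prv (T : form -> Prop) : form -> Prop :=
| p_ax  : forall p, IsAxiom p -> Prv T p
| p_hyp : forall p, T p -> Prv T p
| p_mp  : forall p q, Prv T p -> Prv T (Imp p q) -> Prv T q
| p_nec : forall a p, Thm p -> Prv T (box a p)
| p_R3  : forall th p q, Prv T (Imp th (Neg q)) ->
    (forall n, Prv T (R3prem th p q n)) -> Prv T (Imp th (Neg (Until p q)))
| p_R4  : forall th p q, Prv T (Imp th (Neg (Until p q))) ->
    (forall n, Prv T (R4prem th p q n)) -> Prv T (Imp th (Neg (UntilW p q))).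

Definition theory (T : form -> Prop) : Prop := exists p, T p.
Definition consistent (T : form -> Prop) : Prop :=
  ~ exists c, Prv T c /\ Prv T (Neg c).
Definition complete (T : form -> Prop) : Prop :=
  consistent T /\ forall c, Prv T c \/ Prv T (Neg c).

(* Main.v *)
Require Import Defs.
From Stdlib Require Import Classical.

Definition pimp (x y : pform) := PNeg (PAnd (PNeg (PNeg x)) (PNeg y)).
Definition por (x y : pform) := PNeg (PAnd (PNeg x) (PNeg y)).
Definition piff (x y : pform) := PAnd (pimp x y) (pimp y x).
Definition sub4 (a b c d : form) (n : nat) : form :=
  match n with 0 => a | 1 => b | 2 => c | _ => d end.

Ltac taut := unfold tautology; let v := fresh "v" in intro v; unfold pimp, por, piff; simpl;
  destruct (v 0), (v 1), (v 2), (v 3); reflexivity.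

Lemma T1 p q : Thm (Imp (Iff p q) (Imp p q)).
Proof.
  apply t_ax. exact (A1 (pimp (piff (PVar 0) (PVar 1)) (pimp (PVar 0) (PVar 1)))
    (sub4 p q p p) ltac:(taut)).
Qed.

Lemma T2 p q r : Thm (Imp (Iff p q) (Imp (Iff r p) (Iff r q))).
Proof.
  apply t_ax. exact (A1 (pimp (piff (PVar 1) (PVar 2)) (pimp (piff (PVar 0) (PVar 1)) (piff (PVar 0) (PVar 2))))
    (sub4 r p q q) ltac:(taut)).
Qed.

Lemma T3 p : Thm (Iff p p).
Proof.
  apply t_ax. exact (A1 (piff (PVar 0) (PVar 0)) (sub4 p p p p) ltac:(taut)).
Qed.

Lemma T5 a b c d : Thm (Imp (Imp (Neg a) b) (Imp (Imp (Neg c) d) (Imp (Neg (And a c)) (Or b d)))).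
Proof.
  apply t_ax. exact (A1 (pimp (pimp (PNeg (PVar 0)) (PVar 1)) (pimp (pimp (PNeg (PVar 2)) (PVar 3))
     (pimp (PNeg (PAnd (PVar 0) (PVar 2))) (por (PVar 1) (PVar 3)))))
    (sub4 a b c d) ltac:(taut)).
Qed.

Lemma T6 a b : Thm (Imp b (Imp a b)).
Proof.
  apply t_ax. exact (A1 (pimp (PVar 1) (pimp (PVar 0) (PVar 1))) (sub4 a b a a) ltac:(taut)).
Qed.

Lemma T7 : Thm (Imp (Var 0) (Var 0)).
Proof.
  apply t_ax. exact (A1 (pimp (PVar 0) (PVar 0)) (sub4 (Var 0) (Var 0) (Var 0) (Var 0)) ltac:(taut)).
Qed.

Lemma thm_prv T p : Thm p -> Prv T p.
Proof.
  induction 1.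
  - apply p_ax; assumption.
  - exact (p_mp _ _ _ IHThm1 IHThm2).
  - now apply p_nec.

  - now apply p_R3.
  - now apply p_R4.
Qed.

Lemma boxneg a k X : Thm (Iff (Neg (boxn a k X)) (boxn a k (Neg X))).
Proof.
  induction k as [|k IH]; simpl.
  - apply T3.
  - assert (H1 := t_nec a _ IH).
    assert (H2 : Thm (Iff (box a (Iff (Neg (boxn a k X)) (boxn a k (Neg X))))
                         (Iff (box a (Neg (boxn a k X))) (box a (boxn a k (Neg X)))))).
    { apply t_ax. exact (A4 a BIff _ _). }
    assert (H3 := t_mp _ _ H1 (t_mp _ _ H2 (T1 _ _))).
    assert (H4 : Thm (Iff (Neg (box a (boxn a k X))) (box a (Neg (boxn a k X))))).
    { apply t_ax. apply A3. }
    exact (t_mp _ _ H4 (t_mp _ _ H3 (T2 _ _ _))).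
Qed.

Lemma boxneg_imp a k X : Thm (Imp (Neg (boxn a k X)) (boxn a k (Neg X))).
Proof. exact (t_mp _ _ (boxneg a k X) (T1 _ _)). Qed.

Lemma bigAnd_neg (F F' : nat -> form) :
  (forall k, Thm (Imp (Neg (F k)) (F' k))) ->
  forall n, Thm (Imp (Neg (bigAnd F n)) (bigOr F' n)).
Proof.
  intros H n; induction n as [|n IH]; simpl.
  - apply H.
  - exact (t_mp _ _ (H (S n)) (t_mp _ _ IH (T5 _ _ _ _))).
Qed.

Theorem mainTheorem8 (T : form -> Prop) (phi psi : form) :
  theory T -> complete T -> Prv T (UntilW phi psi) ->
  Prv T (Until phi psi) \/
  exists m : nat,
    Prv T (And (bigAnd (fun i => boxn MW i (Glob (And phi (Neg psi)))) m)
               (boxn MW (S m) (Until phi psi))).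
Proof.
  intros _ [Hcons Hcomp] HU.
  destruct (classic (Prv T (Until phi psi))) as [H|Hn]; [now left|right].
  apply NNPP; intro Hno.
  assert (HN : Prv T (Neg (Until phi psi))).
  { destruct (Hcomp (Until phi psi)); tauto. }
  assert (HM : forall m, Prv T (Neg (And (bigAnd (fun i => boxn MW i (Glob (And phi (Neg psi)))) m)
               (boxn MW (S m) (Until phi psi))))).
  { intro m. destruct (Hcomp (And (bigAnd (fun i => boxn MW i (Glob (And phi (Neg psi)))) m)
               (boxn MW (S m) (Until phi psi)))) as [h|h]; [|exact h].
    exfalso; apply Hno; eauto. }
  set (th := Imp (Var 0) (Var 0)).
  assert (HR : Prv T (Imp th (Neg (UntilW phi psi)))).
  { apply p_R4.
    - exact (p_mp _ _ _ HN (thm_prv _ _ (T6 _ _))).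
    - intro n. unfold R4prem.
      apply (p_mp _ _ _ (p_mp _ _ _ (HM n) (thm_prv _ _
        (t_mp _ _ (boxneg_imp MW (S n) (Until phi psi))
          (t_mp _ _ (bigAnd_neg _ _ (fun k => boxneg_imp MW k _) n) (T5 _ _ _ _)))))).
      apply thm_prv, T6. }
  apply Hcons. exists (UntilW phi psi). split; [exact HU|].
  exact (p_mp _ _ _ (thm_prv _ _ T7) HR).
Qed.
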